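(* Let $n,d$ be positive integers and $V=\mathbb{R}[\mathcal{V}_n]_{\le d}$. The multiplicity $m_{\bm{\lambda}}$ of $S_{\bm{\lambda}}$ in the decomposition of $V$ into irreducible $\mathfrak{S}_n$-modules (equivalently, the dimension of $W_{\tau_{\bm{\lambda}}}$ for any tableau $\tau_{\bm{\lambda}}$ of shape $\bm{\lambda}$) is zero unless $\bm{\lambda}\geq_{\textup{lex}}(n-2d,1^{2d})$; that is, \[ V=\bigoplus_{\bm{\lambda}\geq_{\textup{lex}}(n-2d,1^{2d})} V_{\bm{\lambda}}.\]
   Context: Let $\mathbb{R}[\mathsf{x}]$ be the polynomial ring in the $\binom n2$ variables $\mathsf{x}_{ij}$, $1\le i<j\le n$ (with $\mathsf{x}_{ji}:=\mathsf{x}_{ij}$). Let $\mathcal{V}_n=\{0,1\}^{\binom n2}$ and $\mathcal{I}_n$ the ideal generated by $\mathsf{x}_{ij}^2-\mathsf{x}_{ij}$, $1\le i<j\le n$. $\mathbb{R}[\mathcal{V}_n]=\mathbb{R}[\mathsf{x}]/\mathcal{I}_n$ is the ring of real functions on $\mathcal{V}_n$ (identified as a vector space with square-free polynomials), and $\mathbb{R}[\mathcal{V}_n]_{\le d}$ is the image of the polynomials of degree at most $d$ (the square-free polynomials of degree at most $d$). $\mathfrak{S}_n$ acts by $\mathfrak{s}\cdot\mathsf{x}_{ij}=\mathsf{x}_{\mathfrak{s}(i)\mathfrak{s}(j)}$, extended to ring automorphisms; this descends to $\mathbb{R}[\mathcal{V}_n]_{\le d}$. Irreducible $\mathfrak{S}_n$-modules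 are $S_{\bm{\lambda}}$, $\bm{\lambda}\vdash n$; the isotypic component $V_{\bm{\lambda}}$ of $V$ is the span of all submodules isomorphic to $S_{\bm{\lambda}}$. A tableau $\tau_{\bm{\lambda}}$ of shape $\bm{\lambda}$ is a bijective filling of the Young diagram of $\bm{\lambda}$ with $1,\dots,n$; its row group $\mathfrak{R}_{\tau_{\bm{\lambda}}}$ is the subgroup of $\mathfrak{S}_n$ preserving the set of labels in each row. $W_{\tau_{\bm{\lambda}}}:=V_{\bm{\lambda}}^{\mathfrak{R}_{\tau_{\bm{\lambda}}}}$ is the subspace of $V_{\bm{\lambda}}$ fixed by every element of the row group. $(n-2d,1^{2d})$ is the hook partition with first part $n-2d$ and $2d$ parts equal to $1$; $\geq_{\textup{lex}}$ is the lexicographic order on partitions. *)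

(* Defs.v *)
From HB Require Import structures.
From mathcomp Require Import all_boot all_order all_fingroup all_algebra.
From mathcomp Require Import reals.

Set Implicit Arguments.
Unset Strict Implicit.
Unset Printing Implicit Defensive.

Import GRing.Theory.
Local Open Scope ring_scope.

Definition is_partition (n : nat) (lam : seq nat) : bool :=
  [&& sorted geq lam, all (fun k => 0 < k)%N lam & sumn lam == n].

(* the hook partition (n - 2d, 1^{2d})  (first part truncated at 0) *)
Definition hook (n d : nat) : seq nat := (n - 2 * d)%N :: nseq (2 * d) 1%N.

Definition lex_ge (l m : seq nat) : Prop :=
  (forall j, nth 0%N l j = nth 0%N m j) \/
  exists i, (forall j, (j < i)%N -> nth 0%N l j = nth 0%N m j) /\
            (nth 0%N m i < nth 0%N l i)%N.

(* x_E = prod_{ij in E} x_ij, E a set of edges {i,j} (i <> j) of size <= d.   *)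

Definition is_sqfree_mon (n d : nat) (E : {set {set 'I_n}}) : bool :=
  [forall e in E, #|e| == 2%N] && (#|E| <= d)%N.

Definition sqfree_mon (n d : nat) := {E : {set {set 'I_n}} | is_sqfree_mon d E}.

Definition dimV (n d : nat) : nat := #|{: sqfree_mon n d}|.

(* s . x_E = x_{s(E)} ; the matrix (acting on row vectors) of s on V *)
Definition actE (n : nat) (s : {perm 'I_n}) (E : {set {set 'I_n}}) :
    {set {set 'I_n}} := [set [set s x | x in e] | e : {set 'I_n} in E].

Definition reprV (R : nzRingType) (n d : nat) (s : {perm 'I_n}) : 'M[R]_(dimV n d) :=
  \matrix_(i, j) (val (enum_val j) == actE s (val (enum_val i)))%:R.

(* a tableau of shape lam: label i sits in cell (row, column) = t i;
   t injective with image inside the Young diagram of lam (hence, as lam |- n,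
   a bijective filling of the diagram with the n labels). *)
Definition is_tableau (n : nat) (lam : seq nat)
    (t : {ffun 'I_n -> 'I_n * 'I_n}) : bool :=
  injectiveb t && [forall i, ((t i).2 < nth 0%N lam (t i).1)%N].

Definition row_group (n : nat) (t : {ffun 'I_n -> 'I_n * 'I_n}) : {set {perm 'I_n}} :=
  [set s : {perm 'I_n} | [forall i, (t (s i)).1 == (t i).1]].
Definition col_group (n : nat) (t : {ffun 'I_n -> 'I_n * 'I_n}) : {set {perm 'I_n}} :=
  [set s : {perm 'I_n} | [forall i, (t (s i)).2 == (t i).2]].

(* a tabloid of shape lam is recorded by the row of each label *)
Definition is_tabloid (n : nat) (lam : seq nat) (f : {ffun 'I_n -> 'I_n}) : bool :=
  [forall r : 'I_n, #|[set i | f i == r]| == nth 0%N lam r].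

Definition tabloid (n : nat) (lam : seq nat) :=
  {f : {ffun 'I_n -> 'I_n} | is_tabloid lam f}.

Definition dimM (n : nat) (lam : seq nat) : nat := #|{: tabloid n lam}|.

Definition tabloid_of (n : nat) (t : {ffun 'I_n -> 'I_n * 'I_n}) : {ffun 'I_n -> 'I_n} :=
  [ffun i => (t i).1].

(* s . t = t o s^-1 (label s i goes where i was) *)
Definition act_tab (n : nat) (s : {perm 'I_n}) (t : {ffun 'I_n -> 'I_n * 'I_n}) :
  {ffun 'I_n -> 'I_n * 'I_n} := [ffun k => t ((s^-1)%g k)].

Definition act_tabloid (n : nat) (s : {perm 'I_n}) (f : {ffun 'I_n -> 'I_n}) :
  {ffun 'I_n -> 'I_n} := [ffun k => f ((s^-1)%g k)].

Definition reprM (R : nzRingType) (n : nat) (lam : seq nat) (s : {perm 'I_n}) :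
    'M[R]_(dimM n lam) :=
  \matrix_(i, j) (val (enum_val j) == act_tabloid s (val (enum_val i)))%:R.

Definition polytabloid (R : nzRingType) (n : nat) (lam : seq nat)
    (t : {ffun 'I_n -> 'I_n * 'I_n}) : 'rV[R]_(dimM n lam) :=
  \row_j \sum_(p in col_group t)
     (-1) ^+ odd_perm p * (val (enum_val j) == tabloid_of (act_tab p t))%:R.

Definition specht (R : fieldType) (n : nat) (lam : seq nat) : 'M[R]_(dimM n lam) :=
  (\sum_(t | is_tableau lam t) <<polytabloid R lam t>>)%MS.

Definition is_submoduleV (R : fieldType) (n d : nat) (U : 'M[R]_(dimV n d)) : Prop :=
  forall s : {perm 'I_n}, (U *m reprV R d s <= U)%MS.

Definition iso_to_specht (R : fieldType) (n d : nat) (lam : seq nat)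
    (U : 'M[R]_(dimV n d)) : Prop :=
  exists f : 'M[R]_(dimM n lam, dimV n d),
    [/\ \rank (specht R n lam *m f) = \rank (specht R n lam),
        (specht R n lam *m f == U)%MS &
        forall s : {perm 'I_n},
          specht R n lam *m (reprM R lam s *m f) = specht R n lam *m (f *m reprV R d s)].

(* isotypic component V_lambda = span of all submodules isomorphic to S_lambda;
   it is zero iff every such submodule is zero, i.e. iff m_lambda = 0. *)
Definition multiplicity_zero (R : fieldType) (n d : nat) (lam : seq nat) : Prop :=
  forall U : 'M[R]_(dimV n d), @is_submoduleV R n d U -> @iso_to_specht R n d lam U -> \rank U = 0%N.

(* Main.v *)
Require Import Defs.
From HB Require Import structures.
From mathcomp Require Import all_boot all_order all_fingroup all_algebra.
From mathcomp Require Import reals zify lra.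
Set Implicit Arguments. Unset Strict Implicit.
Import GRing.Theory.
Local Open Scope ring_scope.
Lemma lam0_bound (n d : nat) (lam : seq nat) :
  (0 < n)%N -> (0 < d)%N -> is_partition n lam -> ~ lex_ge lam (hook n d) ->
  (nth 0 lam 0 < n - 2 * d)%N.
Proof.
move=> n0 d0 /and3P[srt pos /eqP sm] nlex.
rewrite ltnNge; apply/negP => le1; apply: nlex.
case: lam srt pos sm le1 => [|x s] srt pos sm le1; first by rewrite /= in sm; lia.
rewrite /= in le1.
case: (ltngtP (n - 2 * d) x) => [lt1|lt1|eqx].
- right; exists 0%N; split=> //; by case.
- lia.
case: s srt pos sm => [|y s'] srt pos sm; first by rewrite /= in sm; lia.
case: (ltnP 1 y) => [y1|y1].
  right; exists 1%N; split; first by case=> //.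
  by rewrite /hook; case: (2 * d)%N d0 => [|k] /=; lia.
left.
have allp : all (pred1 1%N) (y :: s').
  rewrite /= in srt; move/andP: srt => [yx ps'].
  have := order_path_min (leT := geq) (fun a b c h1 h2 => leq_trans h2 h1) ps'.
  move=> al; rewrite /= in pos; move/andP: pos => [_ /andP [y0 pos']].
  apply/andP; split; first by rewrite /=; lia.
  apply/allP => z zs; move/allP: al => /(_ z zs) /= zy.
  move/allP: pos' => /(_ z zs) /= z0; lia.
move/all_pred1P: allp => e; rewrite e in sm *.
rewrite /= sumn_nseq in sm.
rewrite /= in sm.
have hs : (2 * d = (size s').+1)%N.
  move: pos => /= /andP[x0 _]; lia.
move=> j; rewrite /hook eqx hs; by [].
Qed.
Lemma col_bound n (lam : seq nat) (t : {ffun 'I_n -> 'I_n * 'I_n}) i :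
  sorted geq lam -> is_tableau lam t -> ((t i).2 < nth 0 lam 0)%N.
Proof.
move=> srt /andP[_ /forallP /(_ i) h].
case: (ltnP (t i).1 (size lam)) => hs.
  apply: (leq_trans h).
  have := sorted_leq_nth (leT := geq) (fun a b c h1 h2 => leq_trans h2 h1) (@leqnn) 0%N srt.
  move=> /(_ 0%N (t i).1); rewrite !inE => H; apply: H => //; by case: (size lam) hs.
by rewrite nth_default in h.
Qed.

Lemma pigeon n d (lam : seq nat) (t : {ffun 'I_n -> 'I_n * 'I_n}) (E : {set {set 'I_n}}) :
  sorted geq lam -> is_tableau lam t -> is_sqfree_mon d E -> (nth 0 lam 0 < n - 2*d)%N ->
  exists a b : 'I_n, [/\ a != b, (t a).2 = (t b).2,
     forall e, e \in E -> a \notin e & forall e, e \in E -> b \notin e].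
Proof.
move=> srt tab /andP[/forall_inP E2 Ed] hl.
set T := \bigcup_(e in E) e.
have cT : (#|T| <= 2 * d)%N.
  have : (#|T| <= \sum_(e in E) #|e|)%N.
    apply: (big_ind2 (fun (A : {set 'I_n}) (k : nat) => #|A| <= k)%N).
    - by rewrite cards0.
    - move=> A k B l h1 h2; apply: leq_trans (leq_card_setU A B).1 _; exact: leq_add.
    - by [].
  rewrite (eq_bigr (fun _ => 2%N)); last by move=> e /E2 /eqP.
  rewrite sum_nat_const => h; lia.
have cC : (n - 2 * d <= #|~: T|)%N.
  have := cardsC T; rewrite card_ord; lia.
case: (boolP [exists a : 'I_n, exists b : 'I_n,
     [&& a != b, (t a).2 == (t b).2, a \in ~: T & b \in ~: T]]).
  move/existsP => [a /existsP [b /and4P [ab /eqP tab' aT bT]]].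
  exists a, b; split => // e eE; apply/negP => ae.
    by move: aT; rewrite inE; apply/negP/negPn; apply/bigcupP; exists e.
  by move: bT; rewrite inE; apply/negP/negPn; apply/bigcupP; exists e.
move=> Hno; exfalso.
pose c (x : 'I_n) := nat_of_ord (t x).2.
have U : uniq (map c (enum (~: T))).
  rewrite map_inj_in_uniq ?enum_uniq //.
  move=> x y; rewrite !mem_enum => xT yT cxy.
  apply/eqP; apply/negPn/negP => nxy; move/negP: Hno; apply.
  apply/existsP; exists x; apply/existsP; exists y.
  by rewrite nxy xT yT /= andbT; apply/eqP/val_inj.
have := uniq_leq_size (s2 := iota 0 (nth 0 lam 0)) U.
rewrite size_map size_iota -cardE => H.
have : (#|~: T| <= nth 0 lam 0)%N.
  apply: H => z /mapP [x _ ->]; rewrite mem_iota add0n /c.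
  exact: col_bound.
lia.
Qed.

Lemma act_tabloidK n (a b : 'I_n) f :
  act_tabloid (tperm a b) (act_tabloid (tperm a b) f) = f.
Proof. by apply/ffunP => k; rewrite !ffunE tpermV !tpermK. Qed.

Lemma act_tabloid_is n (lam : seq nat) s f :
  is_tabloid lam f -> is_tabloid lam (@act_tabloid n s f).
Proof.
move=> /forallP H; apply/forallP => r; rewrite -(eqP (H r)).
have -> : [set i | act_tabloid s f i == r] = [set s x | x in [set i | f i == r]].
  apply/setP => k; rewrite inE ffunE.
  apply/idP/imsetP.
    by move=> h; exists ((s^-1)%g k); rewrite ?inE // permKV.
  by move=> [x]; rewrite inE => /eqP <- ->; rewrite permK.
by rewrite card_imset //; exact: perm_inj.
Qed.

Lemma act_tabloid_of n s p (t : {ffun 'I_n -> 'I_n * 'I_n}) :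
  act_tabloid s (tabloid_of (act_tab p t)) = tabloid_of (act_tab (p * s)%g t).
Proof. by apply/ffunP => k; rewrite !ffunE invMg permM. Qed.

Lemma polyt_tperm (R : nzRingType) n (lam : seq nat) (t : {ffun 'I_n -> 'I_n * 'I_n})
  (a b : 'I_n) : a != b -> (t a).2 = (t b).2 ->
  polytabloid R lam t *m reprM R lam (tperm a b) = - polytabloid R lam t.
Proof.
move=> nab hab; set tau := tperm a b.
have colt : forall x, (t (tau x)).2 = (t x).2.
  by move=> x; rewrite /tau; case: tpermP => [->|->|] //; rewrite hab.
apply/rowP => j; rewrite !mxE.
set F := fun i : 'I_(dimM n lam) => val (enum_val i).
have Hg : is_tabloid lam (act_tabloid tau (F j)) by apply: act_tabloid_is; exact: valP.
pose i0 := enum_rank (exist (fun f => is_tabloid lam f) _ Hg : tabloid n lam).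
have Fi0 : F i0 = act_tabloid tau (F j) by rewrite /F /i0 enum_rankK.
rewrite (bigD1 i0) //= big1 ?addr0; last first.
  move=> i ni; rewrite !mxE.
  case: eqP; last by rewrite mulr0.
  move=> h; exfalso; move/eqP: ni; apply.
  apply: enum_val_inj; apply: val_inj; rewrite -/(F i) -/(F i0) Fi0 /F h.
  by rewrite act_tabloidK.
rewrite !mxE -/(F i0) Fi0 act_tabloidK eqxx mulr1 -sumrN.
rewrite (reindex_inj (mulIg tau)) /=.
apply: eq_big.
  move=> p; rewrite !inE; apply/forallP/forallP => h x; have := h x; rewrite permM.
    by rewrite colt.
  by rewrite colt.
move=> p _.
rewrite odd_permM signr_addb odd_tperm nab expr1 mulrN1 mulNr; congr (- (_ * _)).
rewrite -(inj_eq (can_inj (@act_tabloidK n a b))) act_tabloidK act_tabloid_of.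
by rewrite -mulgA /tau -{1}(tpermV a b) mulVg mulg1.
Qed.

Lemma actE_tpermK n (a b : 'I_n) (E : {set {set 'I_n}}) : actE (tperm a b) (actE (tperm a b) E) = E.
Proof.
rewrite /actE -imset_comp -[RHS]imset_id; apply: eq_imset => e /=.
by rewrite -imset_comp -[RHS]imset_id; apply: eq_imset => x /=; rewrite tpermK.
Qed.

Lemma actE_fix n (a b : 'I_n) (E : {set {set 'I_n}}) :
  (forall e, e \in E -> a \notin e) -> (forall e, e \in E -> b \notin e) ->
  actE (tperm a b) E = E.
Proof.
move=> ha hb; rewrite /actE -[RHS]imset_id; apply: eq_in_imset => e eE /=.
rewrite -[RHS]imset_id; apply: eq_in_imset => x xe /=.
rewrite tpermD //; apply/negP => /eqP ?; subst x.
  by move: (ha e eE); rewrite xe.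
by move: (hb e eE); rewrite xe.
Qed.

Lemma reprV_fix (R : nzRingType) n d (v : 'rV[R]_(dimV n d)) (j : 'I_(dimV n d)) (a b : 'I_n) :
  (forall e, e \in val (enum_val j) -> a \notin e) ->
  (forall e, e \in val (enum_val j) -> b \notin e) ->
  (v *m reprV R d (tperm a b)) 0 j = v 0 j.
Proof.
move=> ha hb; rewrite !mxE (bigD1 j) //= big1 ?addr0.
  by rewrite mxE actE_fix // eqxx mulr1.
move=> i nij; rewrite mxE; case: eqP; last by rewrite mulr0.
move=> h; exfalso; move/eqP: nij; apply.
apply: enum_val_inj; apply: val_inj.
by rewrite -[val (enum_val i)](actE_tpermK a b) -h actE_fix.
Qed.

Theorem corollary2p5 (R : realType) (n d : nat) :
  (0 < n)%N -> (0 < d)%N ->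
  forall lam : seq nat, is_partition n lam ->
  ~ lex_ge lam (hook n d) ->
  multiplicity_zero R n d lam.
Proof.
move=> n0 d0 lam Hpart Hlex U HU [f [Hrk Heq Hequiv]].
have hl := lam0_bound n0 d0 Hpart Hlex.
have srt : sorted geq lam by case/and3P: Hpart.
have key : forall t, is_tableau lam t -> polytabloid R lam t *m f = 0.
  move=> t tab.
  have sub : (polytabloid R lam t <= specht R n lam)%MS.
    by apply: (sumsmx_sup t) => //; rewrite genmxE.
  have eqv : forall s, polytabloid R lam t *m f *m reprV R d s =
                       polytabloid R lam t *m reprM R lam s *m f.
    by move=> s; case/submxP: sub => x ->; rewrite -!mulmxA Hequiv.
  apply/rowP => j; rewrite [RHS]mxE.
  have [a [b [nab cab ha hb]]] := pigeon srt tab (valP (enum_val j)) hl.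
  have := reprV_fix (polytabloid R lam t *m f) ha hb.
  rewrite eqv polyt_tperm // mulNmx.
  set w := polytabloid R lam t *m f.
  rewrite mxE => h; lra.
have Z : specht R n lam *m f = 0.
  apply/eqP; rewrite -sub_kermx; apply/sumsmx_subP => t tab.
  by rewrite genmxE sub_kermx key.
by rewrite -(eqmx_rank Heq) Z mxrank0.
Qed.
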